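(* Let $n\ge3$. For every $\Gamma_1=([n],Q_1),\Gamma_2=([n],Q_2)\in\mathcal{S}_n$, $$d_4(\Gamma_1,\Gamma_2)=|Q_1\Delta Q_2|-\frac{2}{n+1}A(\Gamma_1\cup\Gamma_2)=|Q_1\Delta Q_2|-\frac{2}{n+1}\bigl(|Q_1\Delta Q_2|-\Lambda_{\ge2}\bigr).$$
   Context: For $n\ge1$ let $[n]=\{1,\dots,n\}$. A contact structure of length $n$ is a simple undirected graph $\Gamma=([n],Q)$ (no self-loops, no multiple edges) such that $\{i,i+1\}\notin Q$ for every $i$; its edges are called contacts, written $i\cdot j$. It is an RNA secondary structure if every node belongs to at most one contact; $\mathcal{S}_n$ is the set of these. $\Gamma_1\cup\Gamma_2=([n],Q_1\cup Q_2)$. $A(\Gamma)$ is the number of unordered pairs $\{i\cdot j,j\cdot k\}$ of distinct contacts of $\Gamma$ sharing a node ($i\neq k$). Orbits: for $\Gamma_1,\Gamma_2\in\mathcal{S}_n$ the orbits are the vertex sets of the connected components of the graph $([n],Q_1\cup Q_2)$; the length of an orbit is its number of nodes. An orbit is cyclic if either it has 2 nodes and its contact lies in $Q_1\cap Q_2$, or it has $m\ge3$ nodes that can be listed $i_1,\dots,i_m$ with $i_1\cdot i_2,\dots,i_{m-1}\cdot i_m,i_m\cdot i_1\in Q_1\cup Q_2$; otherwise it is linear. $\Lambda^{(m)}$ is the number of linear orbits of length $m$, $\Lambda_{\ge k}=\sum_{m\ge k}\Lambda^{(m)}$. $\mathbb{F}_2=\mathbb{Z}/2\mathbb{Z}$;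 the edge ideal $I_\Gamma$ is the ideal of $\mathbb{F}_2[x_1,\dots,x_n]$ generated by $\{x_ix_j:i\cdot j\in Q\}$. For $m\ge3$, $R_{n,m}=\mathbb{F}_2[x_1,\dots,x_n]/\langle\text{all monomials of total degree }m\rangle$, $\pi_m$ the quotient map, $d'_m(\Gamma_1,\Gamma_2)=\log_2\bigl|(\pi_m(I_{\Gamma_1})+\pi_m(I_{\Gamma_2}))/(\pi_m(I_{\Gamma_1})\cap\pi_m(I_{\Gamma_2}))\bigr|$ (cardinality of a quotient of additive groups), and $d_m=d'_m/\binom{n+m-3}{n}$; $d_4=d'_4/(n+1)$. $\Delta$ denotes symmetric difference. *)

(* Defs.v *)
From HB Require Import structures.
From mathcomp Require Import all_boot all_algebra.
From mathcomp Require Import mpoly.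
From Stdlib Require Import ClassicalEpsilon.

Set Implicit Arguments.
Unset Strict Implicit.
Unset Printing Implicit Defensive.
Import GRing.Theory.
Local Open Scope ring_scope.

Definition pb (P : Prop) : bool :=
  if excluded_middle_informative P then true else false.

(* R_{n,m} = F_2[x]/<monomials of degree m>, represented on its standard
   F_2-basis: the monomials of total degree < m (coefficient functions). *)
Notation Rq n m := {ffun 'X_{1..n < m} -> 'F_2}.

Section Defs.
Variable n : nat.
(* Node k : 'I_n stands for the node k+1 of [n]. A contact structure is given
   by its set Q of contacts, each contact being a 2-element set of nodes. *)

Definition contact_structure (Q : {set {set 'I_n}}) : Prop :=
  (forall e, e \in Q -> #|e| = 2%N) /\
  (forall i j : 'I_n, nat_of_ord j = (nat_of_ord i).+1 -> [set i; j] \notin Q).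

Definition secondary_structure (Q : {set {set 'I_n}}) : Prop :=
  contact_structure Q /\ forall x : 'I_n, (#|[set e in Q | x \in e]| <= 1)%N.

Definition symdiff_card (Q1 Q2 : {set {set 'I_n}}) : nat :=
  #|(Q1 :\: Q2) :|: (Q2 :\: Q1)|.

Definition Acount (Q : {set {set 'I_n}}) : nat :=
  #|[set P in powerset Q | (#|P| == 2%N) && (\bigcap_(e in P) e != set0)]|.

Definition adj (Q : {set {set 'I_n}}) : rel 'I_n := fun x y => [set x; y] \in Q.

Definition orbit_of (Q : {set {set 'I_n}}) (x : 'I_n) : {set 'I_n} :=
  [set y | connect (adj Q) x y].
Definition orbits (Q1 Q2 : {set {set 'I_n}}) : {set {set 'I_n}} :=
  [set orbit_of (Q1 :|: Q2) x | x : 'I_n].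

Definition cyclic_orbit (Q1 Q2 : {set {set 'I_n}}) (O : {set 'I_n}) : bool :=
  ((#|O| == 2%N) && (O \in Q1 :&: Q2)) ||
  ((2 < #|O|)%N &&
   [exists t : (#|O|).-tuple 'I_n,
      [&& uniq t, [set x in t] == O & cycle (adj (Q1 :|: Q2)) t]]).

Definition Lambda_ge (Q1 Q2 : {set {set 'I_n}}) (k : nat) : nat :=
  #|[set O in orbits Q1 Q2 | (k <= #|O|)%N && ~~ cyclic_orbit Q1 Q2 O]|.

Definition Pol := {mpoly 'F_2[n]}.

Definition in_edge_ideal (Q : {set {set 'I_n}}) (p : Pol) : Prop :=
  exists f : 'I_n -> 'I_n -> Pol,
    p = \sum_(i : 'I_n) \sum_(j : 'I_n | [set i; j] \in Q) f i j * ('X_i * 'X_j).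


Definition pim (m : nat) (p : Pol) : Rq n m := [ffun mo => p@_(bmnm mo)].

Definition pimI (m : nat) (Q : {set {set 'I_n}}) : {set Rq n m} :=
  [set r | pb (exists p, in_edge_ideal Q p /\ pim m p = r)].

Definition sumset (m : nat) (A B : {set Rq n m}) : {set Rq n m} :=
  imset2 (fun a b : Rq n m => a + b) (mem A) (fun _ => mem B).

(* d'_m = log2 |(A + B)/(A cap B)|; the order of the quotient group is
   |A + B| / |A cap B| (Lagrange), a power of 2, so trunc_log 2 is exact *)
Definition dprime (m : nat) (Q1 Q2 : {set {set 'I_n}}) : nat :=
  trunc_log 2 (#|sumset (pimI m Q1) (pimI m Q2)| %/ #|pimI m Q1 :&: pimI m Q2|).

Definition dm (m : nat) (Q1 Q2 : {set {set 'I_n}}) : rat :=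
  (dprime m Q1 Q2)%:R / ('C(n + m - 3, n))%:R.

End Defs.

(* Main.v *)
Require Import Defs.
From HB Require Import structures.
From mathcomp Require Import all_boot all_algebra.
From mathcomp Require Import mpoly.
From Stdlib Require Import ClassicalEpsilon Lia.
From mathcomp Require Import zify ring.
Set Implicit Arguments. Unset Strict Implicit. Unset Printing Implicit Defensive.
Import GRing.Theory Num.Theory.
Local Open Scope ring_scope.
Lemma pbP (P : Prop) : reflect P (pb P).
Proof. rewrite /pb; case: excluded_middle_informative => h; [left|right]; done. Qed.

Section PartA.
Variable n : nat.
Local Notation M := 'X_{1..n < 4}.
Implicit Types Q : {set {set 'I_n}}.

Definition supp_cond (Q : {set {set 'I_n}}) (m : 'X_{1..n}) : bool :=
  [exists e in Q, [forall i in e, (0 < m i)%N]].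
Definition SQ Q : {set M} := [set mo : M | supp_cond Q mo].
Definition VS (S : {set M}) : {set Rq n 4} :=
  [set r : Rq n 4 | [forall mo, (mo \notin S) ==> (r mo == 0)]].

Lemma ideal_coef Q p : in_edge_ideal Q p ->
  forall m, ~~ supp_cond Q m -> p@_m = 0.
Proof.
move=> [f ->] m Hm; rewrite raddf_sum big1 // => i _.
rewrite raddf_sum big1 // => j Hij.
rewrite -mpolyXD; apply/eqP; apply: contraNT Hm => Hnz.
move: Hnz; rewrite -mcoeff_msupp (perm_mem (msuppMX _ _)) => /mapP [m' _ ->].
apply/existsP; exists [set i; j]; rewrite Hij /=.
apply/forallP => k; apply/implyP; rewrite !inE => /orP [] /eqP ->;
  rewrite !mnmDE !mnm1E eqxx /=; lia.
Qed.

Lemma ideal0 Q : in_edge_ideal (n:=n) Q 0.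
Proof. by exists (fun _ _ => 0); rewrite big1 // => i _; rewrite big1 // => j _; rewrite mul0r. Qed.

Lemma idealD Q p q : in_edge_ideal Q p -> in_edge_ideal Q q -> in_edge_ideal Q (p + q).
Proof.
move=> [f ->] [g ->]; exists (fun a b => f a b + g a b).
rewrite -big_split /=; apply: eq_bigr => i _; rewrite -big_split /=.
by apply: eq_bigr => j _; rewrite mulrDl.
Qed.

Lemma ideal_sum Q (I : finType) (F : I -> Pol n) :
  (forall i, in_edge_ideal Q (F i)) -> in_edge_ideal Q (\sum_i F i).
Proof.
move=> H; apply: (big_ind (in_edge_ideal Q)) => //; [exact: ideal0| exact: idealD].
Qed.

Lemma ideal_gen Q (i j : 'I_n) (q : Pol n) : [set i; j] \in Q ->
  in_edge_ideal Q (q * ('X_i * 'X_j)).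
Proof.
move=> Hij; exists (fun a b => if (a == i) && (b == j) then q else 0).
rewrite (bigD1 i) //= [X in _ = _ + X]big1 ?addr0; last first.
  move=> a Ha; rewrite big1 // => b _.
  by case: ifP => [/andP [/eqP Ea _]|_]; [rewrite Ea eqxx in Ha | rewrite mul0r].
rewrite (bigD1 j) //= !eqxx [X in _ = _ + X]big1 ?addr0 // => b /andP [_ Hb].
by case: ifP => [/andP [_ /eqP Eb]|_]; [rewrite Eb eqxx in Hb | rewrite mul0r].
Qed.

Lemma pimI_eq Q : (forall e, e \in Q -> #|e| = 2%N) -> pimI 4 Q = VS (SQ Q).
Proof.
move=> He; apply/setP => r; rewrite !inE; apply/pbP/forallP.
  move=> [p [Hp <-]] mo; apply/implyP; rewrite inE ffunE => Hmo.
  by rewrite (ideal_coef Hp Hmo).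
move=> Hr; exists (\sum_(mo : M) r mo *: 'X_[bmnm mo]); split.
  apply: ideal_sum => mo; have [->|Hnz] := eqVneq (r mo) 0; first by rewrite scale0r; exact: ideal0.
  have := Hr mo; rewrite (negbTE Hnz) implybF negbK inE => /existsP [e /andP [He' /forallP Hpos]].
  have /cards2P [i [j [Hij De]]] : #|e| == 2%N by rewrite He.
  have Hle : (U_(i) + U_(j) <= bmnm mo)%MM.
    apply/mnm_lepP => k; rewrite mnmDE !mnm1E.
    have Hi := Hpos i; have Hj := Hpos j; rewrite De !inE !eqxx /= orbT in Hi Hj.
    case: (eqVneq i k) => [Eik|_]; case: (eqVneq j k) => [Ejk|_] /=.
    + by rewrite Eik Ejk eqxx in Hij.
    + by rewrite addn0 -Eik.
    + by rewrite -Ejk.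
    + by [].
  rewrite -(submK Hle) mpolyXD scalerAl mpolyXD.
  by apply: ideal_gen; rewrite -De.
apply/ffunP => mo; rewrite ffunE raddf_sum (bigD1 mo) //= mcoeffZ mcoeffX eqxx mulr1.
rewrite big1 ?addr0 // => mo' Hne; rewrite mcoeffZ mcoeffX.
suff -> : (bmnm mo' == bmnm mo) = false by rewrite mulr0.
by apply/negbTE; apply: contra Hne => /eqP H; apply/eqP/val_inj.
Qed.

End PartA.
Section PartB.
Variable n : nat.
Local Notation M := 'X_{1..n < 4}.
Implicit Types Q : {set {set 'I_n}}.

Lemma VS_card (S : {set M}) : #|VS S| = (2 ^ #|S|)%N.
Proof.
have -> : #|VS S| = #|pffun_on (0 : 'F_2) S predT|.
  apply: eq_card => r; rewrite inE; apply/forallP/pffun_onP.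
    move=> H; split; last by move=> x _.
    by apply/supportP => x Hx; apply/eqP; have := H x; rewrite Hx.
  by move=> [/supportP H _] x; apply/implyP => /H ->.
by rewrite card_pffun_on cardT /= -cardT card_Fp.
Qed.

Lemma VS_sum (S1 S2 : {set M}) : sumset (VS S1) (VS S2) = VS (S1 :|: S2).
Proof.
apply/setP => r; apply/imset2P/idP.
  move=> [a b]; rewrite !inE => /forallP Ha /forallP Hb ->.
  apply/forallP => mo; rewrite !inE negb_or; apply/implyP => /andP [H1 H2].
  have := Ha mo; have := Hb mo; rewrite H1 H2 /= => /eqP h1 /eqP h2.
  by rewrite ffunE h1 h2 addr0.
rewrite inE => /forallP Hr.
exists [ffun mo => if mo \in S1 then r mo else 0] (r - [ffun mo => if mo \in S1 then r mo else 0]).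
- rewrite inE; apply/forallP => mo; apply/implyP => H; by rewrite ffunE (negbTE H).
- rewrite inE; apply/forallP => mo; apply/implyP => H; rewrite !ffunE.
  case: ifP => H1; first by rewrite subrr.
  have := Hr mo; rewrite inE H1 (negbTE H) /= => /eqP ->; by rewrite subr0.
- by rewrite addrC subrK.
Qed.

Lemma VS_cap (S1 S2 : {set M}) : VS S1 :&: VS S2 = VS (S1 :&: S2).
Proof.
apply/setP => r; rewrite !inE; apply/andP/forallP.
  move=> [/forallP H1 /forallP H2] mo; rewrite inE negb_and; apply/implyP => /orP [] H.
    by have := H1 mo; rewrite H.
  by have := H2 mo; rewrite H.
move=> H; split; apply/forallP => mo; apply/implyP => Hm; have := H mo;
  by rewrite inE (negbTE Hm) ?andbF.
Qed.

Lemma dprime_eq Q1 Q2 : (forall e, e \in Q1 -> #|e| = 2%N) -> (forall e, e \in Q2 -> #|e| = 2%N) ->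
  dprime 4 Q1 Q2 = (#|SQ Q1 :|: SQ Q2| - #|SQ Q1 :&: SQ Q2|)%N.
Proof.
move=> H1 H2; rewrite /dprime !pimI_eq // VS_sum VS_cap !VS_card.
have Hle : (#|SQ Q1 :&: SQ Q2| <= #|SQ Q1 :|: SQ Q2|)%N.
  by apply: subset_leq_card; apply/subsetP => x; rewrite !inE => /andP [-> _].
by rewrite -{1}(subnK Hle) expnD mulnK ?expn_gt0 // trunc_expnK.
Qed.

End PartB.
Lemma card_disj_cover (T I : finType) (S : {set T}) (J : {set I}) (F : I -> {set T}) :
  (forall x, x \in S -> exists2 i, i \in J & x \in F i) ->
  (forall i, i \in J -> F i \subset S) ->
  (forall i j x, i \in J -> j \in J -> x \in F i -> x \in F j -> i = j) ->
  #|S| = (\sum_(i in J) #|F i|)%N.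
Proof.
move=> Hc Hs Hd.
have E : forall i, #|F i| = (\sum_x (x \in F i))%N.
  by move=> i; rewrite -sum1_card big_mkcond.
rewrite (eq_bigr (fun i => \sum_x (x \in F i))%N); last by move=> i _; exact: E.
rewrite exchange_big /= -sum1_card big_mkcond /=; apply: eq_bigr => x _.
case: ifP => Hx.
  have [i Hi Hxi] := Hc x Hx.
  rewrite (bigD1 i) //= Hxi big1 // => j /andP [Hj Hji].
  case Hxj: (x \in F j) => //; by rewrite (Hd _ _ _ Hj Hi Hxj Hxi) eqxx in Hji.
rewrite big1 // => i Hi; case Hxi: (x \in F i) => //.
by have := subsetP (Hs i Hi) x Hxi; rewrite Hx.
Qed.

Section PartC.
Variable n : nat.
Local Notation M := 'X_{1..n < 4}.
Implicit Types Q : {set {set 'I_n}}.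
Implicit Types T : {set 'I_n}.

Definition Dv T : {set M} := [set mo : M | [forall i in T, (0 < bmnm mo i)%N]].

Lemma m0P : (mdeg (0%MM : 'X_{1..n}) < 4)%N. Proof. by rewrite mdeg0. Qed.
Definition m0 : M := BMultinom m0P.
Definition mk (m : 'X_{1..n}) : M := insubd m0 m.
Lemma mkK m : (mdeg m < 4)%N -> bmnm (mk m) = m.
Proof. by move=> H; rewrite /mk val_insubd H. Qed.

Definition mT T : 'X_{1..n} := [multinom ((i \in T) : nat) | i < n].

Lemma mdeg_mT T : mdeg (mT T) = #|T|.
Proof.
rewrite mdegE; under eq_bigr do rewrite mnmE.
by rewrite -sum1_card [in RHS]big_mkcond.
Qed.

Lemma Dv_le T (mo : M) : mo \in Dv T -> (mT T <= bmnm mo)%MM.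
Proof.
rewrite inE => /forallP H; apply/mnm_lepP => i; rewrite /mT mnmE.
by case Hi: (i \in T) => //; have := H i; rewrite Hi.
Qed.

Lemma Dv_deg T (mo : M) : mo \in Dv T -> (#|T| <= mdeg (bmnm mo))%N.
Proof.
move/Dv_le => H; rewrite -(submK H) mdegD mdeg_mT; lia.
Qed.

Lemma Dv_card T : #|Dv T| = #|[set mo : M | (mdeg (bmnm mo) < 4 - #|T|)%N]|.
Proof.
pose sh (mo : M) := mk (bmnm mo + mT T).
have shK : forall mo : M, (mdeg (bmnm mo) < 4 - #|T|)%N -> bmnm (sh mo) = (bmnm mo + mT T)%MM.
  by move=> mo H; rewrite mkK // mdegD mdeg_mT; lia.
rewrite -(@card_in_imset _ _ sh); last first.
  move=> a b; rewrite !inE => Ha Hb /(congr1 (@bmnm _ _)); rewrite !shK // => /addIm E.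
  by apply: val_inj.
apply: eq_card => mo; apply/idP/imsetP.
  move=> Hmo; have Hle := Dv_le Hmo; have Hd := Dv_deg Hmo.
  have Hdeg : (mdeg (bmnm mo - mT T) < 4)%N.
    have := bmdeg mo; rewrite -{1}(submK Hle) mdegD; lia.
  exists (mk (bmnm mo - mT T)).
    rewrite inE mkK //; have := bmdeg mo; rewrite -{1}(submK Hle) mdegD mdeg_mT; lia.
  apply: val_inj; rewrite /= shK ?mkK ?submK //.
  have := bmdeg mo; rewrite -{1}(submK Hle) mdegD mdeg_mT; lia.
move=> [a]; rewrite inE => Ha ->; rewrite inE; apply/forallP => i; apply/implyP => Hi.
rewrite shK // mnmDE /mT mnmE Hi; lia.
Qed.

Lemma card_deg0 : #|[set mo : M | mdeg (bmnm mo) == 0%N]| = 1%N.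
Proof.
have -> : [set mo : M | mdeg (bmnm mo) == 0%N] = [set m0].
  apply/setP => mo; rewrite !inE mdeg_eq0.
  by apply/eqP/eqP => [H|->//]; apply: val_inj.
by rewrite cards1.
Qed.

Lemma card_deg1 : #|[set mo : M | mdeg (bmnm mo) == 1%N]| = n.
Proof.
have H1 : forall i : 'I_n, bmnm (mk U_(i)) = U_(i)%MM by move=> i; rewrite mkK // mdeg1.
rewrite -[RHS](card_ord n) -cardsT -(@card_imset _ _ (fun i => mk U_(i))); last first.
  by move=> i j /(congr1 (@bmnm _ _)); rewrite !H1 => /eqP; rewrite eq_mnm1 => /eqP.
apply: eq_card => mo; rewrite inE; apply/mdeg1P/imsetP.
  by move=> [i /eqP Hi]; exists i => //; apply: val_inj; rewrite /= H1.
by move=> [i _ ->]; exists i; rewrite H1.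
Qed.

Lemma card_deglt2 : #|[set mo : M | (mdeg (bmnm mo) < 2)%N]| = n.+1.
Proof.
have -> : [set mo : M | (mdeg (bmnm mo) < 2)%N] =
   [set mo : M | mdeg (bmnm mo) == 0%N] :|: [set mo : M | mdeg (bmnm mo) == 1%N].
  by apply/setP => mo; rewrite !inE; case: (mdeg _) => [|[|]].
rewrite cardsU card_deg0 card_deg1.
have -> : [set mo : M | mdeg (bmnm mo) == 0%N] :&: [set mo : M | mdeg (bmnm mo) == 1%N] = set0.
  by apply/setP => mo; rewrite !inE; case: (mdeg _) => [|[|]].
by rewrite cards0 subn0 add1n.
Qed.

Lemma Dv_card2 T : #|T| = 2%N -> #|Dv T| = n.+1.
Proof. by move=> H; rewrite Dv_card H card_deglt2. Qed.

Lemma Dv_card3 T : #|T| = 3%N -> #|Dv T| = 1%N.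
Proof.
move=> H; rewrite Dv_card H -[RHS]card_deg0; apply: eq_card => mo; rewrite !inE.
by case: (mdeg _).
Qed.

Lemma Dv_card4 T : (4 <= #|T|)%N -> #|Dv T| = 0%N.
Proof.
move=> H; rewrite Dv_card; apply/eqP; rewrite cards_eq0; apply/eqP/setP => mo; rewrite !inE; lia.
Qed.

Lemma DvI T1 T2 : Dv T1 :&: Dv T2 = Dv (T1 :|: T2).
Proof.
apply/setP => mo; rewrite !inE; apply/andP/forallP.
  move=> [/forallP H1 /forallP H2] i; rewrite inE; apply/implyP => /orP [] Hi.
    by have := H1 i; rewrite Hi.
  by have := H2 i; rewrite Hi.
by move=> H; split; apply/forallP => i; apply/implyP => Hi; have := H i; rewrite inE Hi ?orbT.
Qed.

End PartC.
Lemma sum_nat_bool (I : finType) (A : {set I}) (P : pred I) :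
  (\sum_(i in A) (P i : nat))%N = #|[set i in A | P i]|.
Proof.
rewrite -sum1_card [RHS]big_mkcond [LHS]big_mkcond /=; apply: eq_bigr => i _.
by rewrite inE; case: (i \in A); case: (P i).
Qed.

Section PartD.
Variable n : nat.
Local Notation M := 'X_{1..n < 4}.
Implicit Types Q : {set {set 'I_n}}.

Lemma sec_disj Q e f : secondary_structure Q -> e \in Q -> f \in Q -> e != f ->
  e :&: f = set0.
Proof.
move=> [_ Hs] He Hf Hne; apply/setP => x; rewrite inE in_set0; apply/negP => /andP [xe xf].
have := Hs x; have : [set e; f] \subset [set g in Q | x \in g].
  by apply/subsetP => g; rewrite !inE => /orP [] /eqP ->; rewrite ?He ?Hf.
by move/subset_leq_card; rewrite cards2 Hne => /leq_trans H /H.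
Qed.

Lemma sec_card2 Q e : secondary_structure Q -> e \in Q -> #|e| = 2%N.
Proof. by move=> [[H _] _] /H. Qed.

Lemma Dv_two Q e e' (mo : M) : secondary_structure Q -> e \in Q -> e' \in Q ->
  mo \in Dv e -> mo \in Dv e' -> e = e'.
Proof.
move=> HQ He He' H1 H2; apply/eqP; apply/negP => /negP Hne.
have : mo \in Dv (e :|: e') by rewrite -DvI inE H1 H2.
move/Dv_deg; rewrite cardsU (sec_disj HQ He He' Hne) cards0 subn0.
rewrite (sec_card2 HQ He) (sec_card2 HQ He').
by have := bmdeg mo; lia.
Qed.

Lemma SQ_card Q : secondary_structure Q -> #|SQ Q| = (#|Q| * n.+1)%N.
Proof.
move=> HQ; rewrite (@card_disj_cover _ _ _ Q (@Dv n)).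
- rewrite (eq_bigr (fun _ => n.+1)) ?sum_nat_const // => e He.
  by apply: Dv_card2; exact: sec_card2 HQ He.
- by move=> x; rewrite !inE => /existsP [e /andP [He H]]; exists e; rewrite ?inE.
- by move=> e He; apply/subsetP => x; rewrite !inE => H; apply/existsP; exists e; rewrite He.
- by move=> e e' x He He'; apply: (Dv_two HQ He He').
Qed.

Definition Apairs Q1 Q2 : {set {set 'I_n} * {set 'I_n}} :=
  [set p in setX Q1 Q2 | (p.1 != p.2) && (p.1 :&: p.2 != set0)].

Lemma card_cap_le1 (e f : {set 'I_n}) : #|e| = 2%N -> #|f| = 2%N -> e != f ->
  (#|e :&: f| <= 1)%N.
Proof.
move=> He Hf Hne; rewrite leqNgt; apply/negP => H.
have E1 : e :&: f == e by rewrite eqEcard subsetIl He.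
have E2 : e :&: f == f by rewrite eqEcard subsetIr Hf.
by move/eqP: E1 => E1; move/eqP: E2; rewrite E1 => E; rewrite E eqxx in Hne.
Qed.

Lemma SQcap_card Q1 Q2 : secondary_structure Q1 -> secondary_structure Q2 ->
  #|SQ Q1 :&: SQ Q2| = (#|Q1 :&: Q2| * n.+1 + #|Apairs Q1 Q2|)%N.
Proof.
move=> H1 H2; rewrite (@card_disj_cover _ _ _ (setX Q1 Q2) (fun p => Dv (p.1 :|: p.2))).
- rewrite (eq_bigr (fun p => (p.1 == p.2) * n.+1 +
       ((p.1 != p.2) && (p.1 :&: p.2 != set0)))%N); last first.
    move=> [e f] /setXP [He Hf] /=.
    have ce := sec_card2 H1 He; have cf := sec_card2 H2 Hf.
    case: eqVneq => [<-|Hne] /=; first by rewrite setUid Dv_card2 // mul1n addn0.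
    rewrite mul0n add0n; have := card_cap_le1 ce cf Hne.
    case Hc: #|e :&: f| => [|[|//]] _.
      have -> : e :&: f == set0 by rewrite -cards_eq0 Hc.
      by rewrite Dv_card4 // cardsU ce cf Hc.
    have -> : e :&: f != set0 by rewrite -cards_eq0 Hc.
    by rewrite Dv_card3 // cardsU ce cf Hc.
  rewrite big_split /= -big_distrl /= !sum_nat_bool; congr (_ * _ + _)%N.
  rewrite -(@card_in_imset _ _ (fun e => (e, e)) (Q1 :&: Q2)); last by move=> a b _ _ [].
  apply: eq_card => [[e f]]; rewrite !inE /=; apply/andP/imsetP => /=.
    by move=> [/andP [He Hf] /eqP Ef]; subst f; exists e; rewrite // inE He Hf.
  by move=> [g]; rewrite inE => /andP [He Hf] [-> ->]; rewrite He Hf.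
- move=> mo; rewrite !inE => /andP [/existsP [e /andP [He Hme]] /existsP [f /andP [Hf Hmf]]].
  by exists (e, f); [rewrite inE He Hf | rewrite /= -DvI !inE Hme Hmf].
- move=> [e f] /setXP [He Hf] /=; apply/subsetP => mo; rewrite -DvI !inE => /andP [Hme Hmf].
  by apply/andP; split; apply/existsP; [exists e; rewrite He | exists f; rewrite Hf].
- move=> [e f] [e' f'] mo /setXP [He Hf] /setXP [He' Hf'] /=.
  rewrite -!DvI => /setIP [Ha Hb] /setIP [Hc Hd].
  by rewrite (Dv_two H1 He He' Ha Hc) (Dv_two H2 Hf Hf' Hb Hd).
Qed.

Lemma bigcap2 (a b : {set 'I_n}) : \bigcap_(e in [set a; b]) e = a :&: b.
Proof.
apply/setP => x; rewrite inE; apply/bigcapP/andP.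
  by move=> H; split; apply: H; rewrite !inE eqxx ?orbT.
by move=> [Ha Hb] e; rewrite !inE => /orP [] /eqP ->.
Qed.

Lemma Acount_pairs Q1 Q2 : secondary_structure Q1 -> secondary_structure Q2 ->
  Acount (Q1 :|: Q2) = #|Apairs Q1 Q2|.
Proof.
move=> H1 H2; rewrite /Acount -(@card_in_imset _ _ (fun p => [set p.1; p.2]) (Apairs Q1 Q2)).
  apply: eq_card => P; rewrite !inE; apply/idP/imsetP.
    move=> /andP [HP /andP [/cards2P [a [b [Hab EP]]] Hcap]]; subst P.
    rewrite bigcap2 in Hcap.
    have Ha : a \in Q1 :|: Q2 by rewrite (subsetP HP) // set21.
    have Hb : b \in Q1 :|: Q2 by rewrite (subsetP HP) // set22.
    rewrite !inE in Ha Hb.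
    case Ha1: (a \in Q1).
      case Hb1: (b \in Q1); first by rewrite (sec_disj H1 Ha1 Hb1 Hab) eqxx in Hcap.
      rewrite Hb1 /= in Hb; exists (a, b) => //; by rewrite !inE Ha1 Hb Hab Hcap.
    rewrite Ha1 /= in Ha; case Hb2: (b \in Q2).
      by rewrite (sec_disj H2 Ha Hb2 Hab) eqxx in Hcap.
    rewrite Hb2 orbF in Hb; exists (b, a); last by rewrite /= setUC.
    by rewrite !inE Ha Hb eq_sym Hab setIC Hcap.
  move=> [[e f]]; rewrite !inE /= => /andP [/andP [He Hf] /andP [Hne Hcap]] ->.
  rewrite bigcap2 Hcap cards2 Hne !andbT; apply/subsetP => g; rewrite !inE.
  by move=> /orP [] /eqP ->; rewrite ?He ?Hf ?orbT.
move=> [e f] [e' f']; rewrite !inE /= => /andP [/andP [He Hf] /andP [Hne Hcap]].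
move=> /andP [/andP [He' Hf'] /andP [Hne' Hcap']] E.
have : e \in [set e'; f'] by rewrite -E !inE eqxx.
rewrite !inE => /orP [] /eqP Ee.
  subst e'; have : f \in [set e; f'] by rewrite -E !inE eqxx orbT.
  rewrite !inE => /orP [] /eqP Ef; first by rewrite Ef eqxx in Hne.
  by rewrite Ef.
subst f'; have : e' \in [set e; f] by rewrite E !inE eqxx.
rewrite !inE => /orP [] /eqP Ee'; first by rewrite Ee' eqxx in Hne'.
subst e'; by rewrite (sec_disj H2 Hf Hf' Hne') eqxx in Hcap'.
Qed.

End PartD.
Lemma set2C' (T : finType) (a b : T) : [set a; b] = [set b; a].
Proof. by apply/setP => x; rewrite !inE orbC. Qed.

Lemma iter_inj (T : Type) (f : T -> T) k : injective f -> injective (iter k f).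
Proof. by move=> Hf; elim: k => //= k IH x y /Hf /IH. Qed.

Section Sigma.
Variable n : nat.
Implicit Types Q : {set {set 'I_n}}.

Definition sig Q (x : 'I_n) : 'I_n := odflt x [pick y | [set x; y] \in Q].

Lemma edge_neq Q x y : secondary_structure Q -> [set x; y] \in Q -> x != y.
Proof.
move=> HQ /(sec_card2 HQ); rewrite cards2; case: eqVneq => //.
Qed.

Lemma sig_edge Q x y : secondary_structure Q -> [set x; y] \in Q -> sig Q x = y.
Proof.
move=> HQ Hxy; rewrite /sig; case: pickP => [z Hz|/(_ y)]; last by rewrite Hxy.
apply/eqP; apply/negP => /negP Hne.
have Hxz := edge_neq HQ Hz; have Hxy' := edge_neq HQ Hxy.
have Hd : [set x; z] != [set x; y].
  apply/negP => /eqP E; have : y \in [set x; z] by rewrite E !inE eqxx orbT.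
  by rewrite !inE => /orP [] /eqP E'; [rewrite E' eqxx in Hxy' | rewrite E' eqxx in Hne].
have := sec_disj HQ Hz Hxy Hd; move/setP => /(_ x); rewrite !inE !eqxx.
by [].
Qed.

Lemma sig_edge2 Q x : sig Q x != x -> [set x; sig Q x] \in Q.
Proof. by rewrite /sig; case: pickP => [z Hz|_] //=; rewrite eqxx. Qed.

Lemma sigK Q : secondary_structure Q -> involutive (sig Q).
Proof.
move=> HQ x; case: (eqVneq (sig Q x) x) => [E|Hne]; first by rewrite !E.
by apply: sig_edge => //; rewrite set2C'; apply: sig_edge2.
Qed.

Lemma edgeE Q x y : secondary_structure Q -> ([set x; y] \in Q) = (sig Q x == y) && (x != y).
Proof.
move=> HQ; apply/idP/andP.
  by move=> H; rewrite (sig_edge HQ H) (edge_neq HQ H).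
by move=> [/eqP <- Hne]; apply: sig_edge2; rewrite eq_sym.
Qed.

Lemma edge_at Q e x : secondary_structure Q -> e \in Q -> x \in e ->
  e = [set x; sig Q x] /\ sig Q x != x.
Proof.
move=> HQ He Hx; have /cards2P [a [b [Hab Eab]]] : #|e| == 2%N by rewrite (sec_card2 HQ He).
subst e; move: Hx; rewrite !inE => /orP [] /eqP ->.
  by rewrite (sig_edge HQ He) eq_sym.
rewrite set2C' in He; rewrite (sig_edge HQ He) set2C'; split => //; by rewrite eq_sym.
Qed.

Lemma card_matched Q : secondary_structure Q -> #|[set x | sig Q x != x]| = (2 * #|Q|)%N.
Proof.
move=> HQ; rewrite (@card_disj_cover _ _ _ Q id).
- rewrite (eq_bigr (fun _ => 2%N)) ?sum_nat_const; first by rewrite mulnC.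
  by move=> e He; exact: sec_card2 HQ He.
- move=> x; rewrite inE => Hx; exists [set x; sig Q x]; first exact: sig_edge2.
  by rewrite !inE eqxx.
- move=> e He; apply/subsetP => x Hx; rewrite inE; exact: (edge_at HQ He Hx).2.
- move=> e f x He Hf /= Hxe Hxf; apply/eqP; apply/negP => /negP Hne.
  by have := sec_disj HQ He Hf Hne; move/setP/(_ x); rewrite !inE Hxe Hxf.
Qed.

End Sigma.
Lemma symdiff_eq (n : nat) (Q1 Q2 : {set {set 'I_n}}) :
  symdiff_card Q1 Q2 = (#|Q1| + #|Q2| - 2 * #|Q1 :&: Q2|)%N.
Proof.
rewrite /symdiff_card cardsU !cardsD.
have -> : (Q1 :\: Q2) :&: (Q2 :\: Q1) = set0.
  by apply/setP => x; rewrite !inE; case: (x \in Q1); case: (x \in Q2).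
rewrite cards0 subn0 setIC.
have := subset_leq_card (subsetIl Q1 Q2); have := subset_leq_card (subsetIr Q1 Q2).
rewrite setIC; lia.
Qed.

Section Counting.
Variable n : nat.
Variables Q1 Q2 : {set {set 'I_n}}.
Hypothesis H1 : secondary_structure Q1.
Hypothesis H2 : secondary_structure Q2.
Local Notation s1 := (sig Q1).
Local Notation s2 := (sig Q2).

Lemma common_count :
  #|[set x | (s1 x != x) && (s1 x == s2 x)]| = (2 * #|Q1 :&: Q2|)%N.
Proof.
rewrite (@card_disj_cover _ _ _ (Q1 :&: Q2) id).
- rewrite (eq_bigr (fun _ => 2%N)) ?sum_nat_const; first by rewrite mulnC.
  by move=> e; rewrite inE => /andP [He _]; exact: sec_card2 H1 He.
- move=> x; rewrite inE => /andP [Hx /eqP E]; exists [set x; s1 x]; last by rewrite !inE eqxx.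
  rewrite inE sig_edge2 //= E sig_edge2 //; by rewrite -E.
- move=> e; rewrite inE => /andP [He1 He2]; apply/subsetP => x Hx; rewrite inE.
  have [E1 N1] := edge_at H1 He1 Hx; have [E2 N2] := edge_at H2 He2 Hx.
  have : s1 x \in e by rewrite E1 !inE eqxx orbT.
  by rewrite N1 E2 !inE (negbTE N1) /= => ->.
- move=> e f x; rewrite !inE => /andP [He _] /andP [Hf _] /= Hxe Hxf.
  apply/eqP; apply/negP => /negP Hne.
  by have := sec_disj H1 He Hf Hne; move/setP/(_ x); rewrite !inE Hxe Hxf.
Qed.

Lemma pair_count :
  #|Apairs Q1 Q2| = #|[set x | [&& s1 x != x, s2 x != x & s1 x != s2 x]]|.
Proof.
rewrite -(@card_in_imset _ _ (fun x => ([set x; s1 x], [set x; s2 x]))).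
  apply: eq_card => [[e f]]; apply/idP/imsetP.
    rewrite !inE /= => /andP [/andP [He Hf] /andP [Hne /set0Pn [x]]].
    rewrite inE => /andP [Hxe Hxf].
    have [E1 N1] := edge_at H1 He Hxe; have [E2 N2] := edge_at H2 Hf Hxf.
    exists x; last by rewrite -E1 -E2.
    rewrite inE N1 N2 /=; apply: contra Hne => /eqP E; by rewrite E1 E2 E.
  move=> [x]; rewrite inE => /and3P [N1 N2 N12] [-> ->].
  rewrite !inE /= !sig_edge2 //=; apply/andP; split.
    apply/negP => /eqP E; have : s2 x \in [set x; s1 x] by rewrite E !inE eqxx orbT.
    by rewrite !inE (negbTE N2) /= eq_sym (negbTE N12).
  by apply/set0Pn; exists x; rewrite !inE eqxx.
move=> x y; rewrite !inE => /and3P [N1 N2 N12] _ [E1 E2].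
have : y \in [set x; s1 x] by rewrite E1 !inE eqxx.
have : y \in [set x; s2 x] by rewrite E2 !inE eqxx.
rewrite !inE => /orP [/eqP -> //|/eqP Ey2] /orP [/eqP -> //|/eqP Ey1].
by rewrite -Ey1 -Ey2 eqxx in N12.
Qed.

Definition ep (x : 'I_n) : bool := (s1 x != x) != (s2 x != x).

Lemma D3_from_E :
  #|[set x | ep x]| = (2 * Lambda_ge Q1 Q2 2)%N ->
  (Acount (Q1 :|: Q2) + Lambda_ge Q1 Q2 2 = symdiff_card Q1 Q2)%N.
Proof.
move=> HE.
have Hpt : forall x, ((s1 x != x) + (s2 x != x) =
   2 * [&& s1 x != x, s2 x != x & s1 x != s2 x] + 2 * ((s1 x != x) && (s1 x == s2 x)) + ep x)%N.
  move=> x; rewrite /ep; move: (s1 x) (s2 x) => a b.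
  case Ea: (a == x); case Eb: (b == x); case Eab: (a == b) => //=.
  by move/eqP: Eab => Eab; move/eqP: Eb => Eb; rewrite Eab Eb eqxx in Ea.
have Hsum : (\sum_(x in [set: 'I_n]) ((s1 x != x) + (s2 x != x)) =
   \sum_(x in [set: 'I_n]) (2 * [&& s1 x != x, s2 x != x & s1 x != s2 x] +
        2 * ((s1 x != x) && (s1 x == s2 x)) + ep x))%N.
  by apply: eq_bigr => x _; exact: Hpt x.
rewrite !big_split /= !big1_eq !addn0 !sum_nat_bool in Hsum.
have C1 := card_matched H1; have C2 := card_matched H2.
have : [set x in [set: 'I_n] | s1 x != x] = [set x | s1 x != x] by apply/setP => x; rewrite !inE.
have : [set x in [set: 'I_n] | s2 x != x] = [set x | s2 x != x] by apply/setP => x; rewrite !inE.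
have : [set x in [set: 'I_n] | ep x] = [set x | ep x] by apply/setP => x; rewrite !inE.
have : [set x in [set: 'I_n] | [&& s1 x != x, s2 x != x & s1 x != s2 x]] =
       [set x | [&& s1 x != x, s2 x != x & s1 x != s2 x]] by apply/setP => x; rewrite !inE.
have : [set x in [set: 'I_n] | (s1 x != x) && (s1 x == s2 x)] =
       [set x | (s1 x != x) && (s1 x == s2 x)] by apply/setP => x; rewrite !inE.
move=> Ea Eb Ec Ed Ee; rewrite Ea Eb Ec Ed Ee in Hsum.
rewrite common_count C1 C2 HE -pair_count in Hsum.
rewrite Acount_pairs // symdiff_eq.
have Hc1 := subset_leq_card (subsetIl Q1 Q2); have Hc2 := subset_leq_card (subsetIr Q1 Q2).
lia.
Qed.

End Counting.
Lemma cycle_two_nb (T : eqType) (e : rel T) (t : seq T) (y : T) :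
  uniq t -> cycle e t -> (2 < size t)%N -> y \in t ->
  exists z w, [/\ z != w, e y z & e w y].
Proof.
move=> Hu Hc Hs Hy; case: (rot_to Hy) => i s' Hr.
have Hu' : uniq (y :: s') by rewrite -Hr rot_uniq.
have Hc' : cycle e (y :: s') by rewrite -Hr rot_cycle.
have Hs' : (2 < size (y :: s'))%N by rewrite -Hr size_rot.
clear Hr; case: s' Hu' Hc' Hs' => [|z [|a s3]] //= Hu' Hc' _.
exists z, (last a s3); split.
- have : last a s3 \in a :: s3 by apply: mem_last.
  by move=> Hl; apply/negP => /eqP E; move: Hu'; rewrite E Hl /= andbF.
- by case/andP: Hc'.
- move: Hc' => /andP [_ /andP [_]]; rewrite rcons_path => /andP [_]; done.
Qed.

Section Graph.
Variable n : nat.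
Variables Q1 Q2 : {set {set 'I_n}}.
Hypothesis H1 : secondary_structure Q1.
Hypothesis H2 : secondary_structure Q2.
Local Notation s1 := (sig Q1).
Local Notation s2 := (sig Q2).
Local Notation Q := (Q1 :|: Q2).
Local Notation A := (adj (Q1 :|: Q2)).
Local Notation ep := (ep Q1 Q2).

Lemma adjE x y : A x y = (x != y) && ((s1 x == y) || (s2 x == y)).
Proof. by rewrite /adj inE (edgeE _ _ H1) (edgeE _ _ H2); case: (x != y); rewrite ?andbF ?andbT. Qed.

Lemma adj_sym : ssrbool.symmetric A.
Proof. by move=> x y; rewrite /adj set2C'. Qed.

Lemma csym : connect_sym A.
Proof. exact: sym_connect_sym adj_sym. Qed.

Lemma orbit_sub (S : {set 'I_n}) x : x \in S ->
  (forall a b, a \in S -> A a b -> b \in S) -> orbit_of Q x \subset S.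
Proof.
move=> Hx HS; apply/subsetP => y; rewrite inE => /connectP [s Hp ->].
elim: s x Hx Hp => //= a s IH x Hx /andP [Hxa Hp]; exact: IH (HS _ _ Hx Hxa) Hp.
Qed.

Lemma orbit_same x y : y \in orbit_of Q x -> orbit_of Q y = orbit_of Q x.
Proof.
rewrite inE => Hxy; apply/setP => z; rewrite !inE.
by rewrite (same_connect csym Hxy).
Qed.

Lemma in_orbit_self x : x \in orbit_of Q x.
Proof. by rewrite inE connect0. Qed.

Definition sb (b : bool) := if b then s1 else s2.

Lemma sbK b : involutive (sb b).
Proof. by case: b; apply: sigK. Qed.

Lemma adj_sb b x : sb b x != x -> A x (sb b x).
Proof. by move=> H; rewrite adjE eq_sym H /=; case: b {H} => /=; rewrite eqxx ?orbT. Qed.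

Lemma orbit_sb b x : sb b x \in orbit_of Q x.
Proof.
rewrite inE; case: (eqVneq (sb b x) x) => [->|H]; first exact: connect0.
by apply: connect1; apply: adj_sb.
Qed.

Lemma adj_cases x y : A x y -> exists b, sb b x = y /\ sb b x != x.
Proof.
rewrite adjE => /andP [Hne /orP [] /eqP E]; [exists true | exists false];
  by rewrite /= E eq_sym.
Qed.

Lemma iso_orbit y : s1 y = y -> s2 y = y -> orbit_of Q y = [set y].
Proof.
move=> E1 E2; apply/eqP; rewrite eqEsubset; apply/andP; split.
  apply: orbit_sub; first by rewrite inE.
  move=> a b; rewrite inE => /eqP -> /adj_cases [[] [/= E N]];
    by [rewrite E1 eqxx in N | rewrite E2 eqxx in N].
by apply/subsetP => z; rewrite !inE => /eqP ->; apply: connect0.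
Qed.

Lemma common_orbit y : s1 y = s2 y -> s1 y != y -> orbit_of Q y = [set y; s1 y].
Proof.
move=> E N; apply/eqP; rewrite eqEsubset; apply/andP; split.
  apply: orbit_sub; first by rewrite !inE eqxx.
  move=> a b; rewrite !inE => /orP [] /eqP -> /adj_cases [[] [/= Eb Nb]].
  - by rewrite -Eb eqxx orbT.
  - by rewrite -Eb -E eqxx orbT.
  - by rewrite -Eb sigK // eqxx.
  - by rewrite -Eb E sigK // eqxx.
apply/subsetP => z; rewrite !inE => /orP [] /eqP ->; first exact: connect0.
by have := orbit_sb true y; rewrite inE.
Qed.

Definition tau (d : 'I_n * bool) : 'I_n * bool := (sb d.2 d.1, ~~ d.2).
Definition phi (d : 'I_n * bool) : 'I_n * bool := (d.1, ~~ d.2).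
Definition bounce (d : 'I_n * bool) : bool := sb d.2 d.1 == d.1.

Lemma tau_inj : injective tau.
Proof.
move=> [x b] [y c] [E1 E2]; have Ebc : b = c by move: E2; case: (b); case: (c).
subst c; congr (_, _); by rewrite -(sbK b x) E1 sbK.
Qed.

Lemma tau_phi_tau d : tau (phi (tau d)) = phi d.
Proof. by case: d => x b; rewrite /tau /phi /= negbK sbK. Qed.

Lemma bounceE d : bounce d = (phi d == tau d).
Proof. by case: d => x b; rewrite /bounce /phi /tau xpair_eqE eqxx andbT eq_sym. Qed.

Lemma iter_phi j d : iter j tau (phi (iter j tau d)) = phi d.
Proof.
elim: j => // j IH; by rewrite iterSr iterS tau_phi_tau.
Qed.

Lemma iter_col j d : (iter j tau d).2 = d.2 (+) odd j.
Proof.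
elim: j => [|j IH]; first by rewrite addbF.
by rewrite iterS /= IH addbN.
Qed.

Lemma iter_node_conn j d : connect A d.1 (iter j tau d).1.
Proof.
elim: j => [|j IH]; first exact: connect0.
rewrite iterS; apply: connect_trans IH _; rewrite /tau /=.
have := orbit_sb (iter j tau d).2 (iter j tau d).1; by rewrite inE.
Qed.

Lemma T_sub p q : fconnect tau p q -> connect A p.1 q.1.
Proof. by move/iter_findex <-; apply: iter_node_conn. Qed.

Lemma T_cover p y : connect A p.1 y -> exists c, fconnect tau p (y, c).
Proof.
move=> Hy.
have : y \in [set z | [exists c, fconnect tau p (z, c)]].
  apply: (subsetP (orbit_sub (x := p.1) _ _)); last by rewrite inE.
    by rewrite inE; apply/existsP; exists p.2; case: p {Hy} => ? ?; exact: connect0.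
  move=> a b; rewrite !inE => /existsP [c Hc] /adj_cases [d [Eb Nb]].
  apply/existsP; exists (~~ c).
  case: (eqVneq d c) => [Edc|Ndc].
    apply: connect_trans Hc _; apply: connect1; subst d; by rewrite /= /tau /= Eb.
  have Hd : d = ~~ c by move: Ndc; case: (d); case: (c).
  apply: connect_trans Hc _; rewrite fconnect_sym; last exact: tau_inj.
  apply: connect1; by rewrite /= /tau /= -Eb Hd negbK -Hd sbK.
by rewrite inE => /existsP.
Qed.

Section Orb.
Variable p : 'I_n * bool.
Local Notation L := (order tau p).

Lemma iterL : iter L tau p = p.
Proof. exact: iter_order tau_inj p. Qed.

Lemma iter_addL k : iter (k + L) tau p = iter k tau p.
Proof. by rewrite iterD iterL. Qed.

Lemma iter_range a b : (a <= b)%N -> (b - a < L)%N -> iter a tau p = iter b tau p -> a = b.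
Proof.
move=> Hab Hl E.
have : iter a tau (iter (b - a) tau p) = iter a tau (iter 0 tau p).
  by rewrite -iterD subnKC // -E.
move/(iter_inj (k:=a) tau_inj) => /= E'.
have := findex_iter Hl; rewrite E' findex0; lia.
Qed.

Lemma phi_iter k j : phi p = iter k tau p -> (j <= L)%N ->
  phi (iter j tau p) = iter (k + L - j) tau p.
Proof.
move=> Hk Hj; apply: (iter_inj (k:=j) tau_inj).
rewrite iter_phi -iterD (_ : (j + (k + L - j) = k + L)%N); last by lia.
by rewrite iter_addL.
Qed.

Lemma L_even : ~~ odd L.
Proof. by have := iter_col L p; rewrite iterL; case: (p.2); case: (odd L). Qed.

Lemma L_gt0 : (0 < L)%N.
Proof. exact: order_gt0. Qed.

End Orb.

Lemma phi_bounce q : fconnect tau q (phi q) -> exists j, bounce (iter j tau q).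
Proof.
move=> Hq; set k := findex tau q (phi q).
have Hk : phi q = iter k tau q by rewrite iter_findex.
have Hkl : (k < order tau q)%N by apply: findex_max.
have Hodd : odd k.
  have := iter_col k q; rewrite -Hk /phi /=; by case: (q.2); case: (odd k).
have Hkh := odd_double_half k; rewrite Hodd -muln2 /= in Hkh.
exists k./2; rewrite bounceE.
rewrite (phi_iter Hk); last by lia.
rewrite -iterS; apply/eqP.
rewrite (_ : (k + order tau q - k./2 = (k./2).+1 + order tau q)%N) ?iter_addL //.
lia.
Qed.

Lemma sb_in_orbit x y b : y \in orbit_of Q x -> sb b y \in orbit_of Q x.
Proof. by move=> Hy; rewrite -(orbit_same Hy); apply: orbit_sb. Qed.

Lemma no_ep_cyclic x y : cyclic_orbit Q1 Q2 (orbit_of Q x) -> y \in orbit_of Q x -> ~~ ep y.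
Proof.
rewrite /cyclic_orbit => /orP [/andP [_ HO] | /andP [Hs /existsP [t /and3P [Hu /eqP Ht Hc]]]] Hy.
  move: HO; rewrite inE => /andP [HO1 HO2].
  by rewrite /ep (edge_at H1 HO1 Hy).2 (edge_at H2 HO2 Hy).2.
have Hyt : y \in t.
  have : y \in [set z in t] by rewrite Ht.
  by rewrite inE.
have Hst : (2 < size t)%N by rewrite size_tuple.
have [z [w [Hzw Hyz Hwy]]] := cycle_two_nb Hu Hc Hst Hyt.
rewrite adj_sym in Hwy.
have [b [Eb Nb]] := adj_cases Hyz; have [c [Ec Nc]] := adj_cases Hwy.
have Hbc : b != c by apply: contra Hzw => /eqP Ebc; rewrite -Eb -Ec Ebc.
have Hc' : c = ~~ b by move: Hbc; case: (b); case: (c).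
subst c; rewrite /ep; case: (b) Nb Nc => /= -> ->; done.
Qed.

Lemma sb_fix_small x y b : (#|orbit_of Q x| < 2)%N -> y \in orbit_of Q x -> sb b y = y.
Proof.
move=> Hs Hy; apply/eqP; apply/negPn/negP => Hne.
have : [set y; sb b y] \subset orbit_of Q x.
  by apply/subsetP => z /set2P [] ->; [exact: Hy | exact: sb_in_orbit].
move/subset_leq_card; rewrite cards2 eq_sym Hne; lia.
Qed.

Lemma no_ep_small x y : (#|orbit_of Q x| < 2)%N -> y \in orbit_of Q x -> ~~ ep y.
Proof.
move=> Hs Hy; rewrite /ep.
have E1 := sb_fix_small true Hs Hy; have E2 := sb_fix_small false Hs Hy.
by rewrite /= in E1 E2; rewrite E1 E2 !eqxx.
Qed.

Lemma no_iso x y : (2 <= #|orbit_of Q x|)%N -> y \in orbit_of Q x -> (s1 y != y) || (s2 y != y).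
Proof.
move=> Hs Hy; apply/negPn/negP; rewrite negb_or !negbK => /andP [/eqP E1 /eqP E2].
by move: Hs; rewrite -(orbit_same Hy) (iso_orbit E1 E2) cards1.
Qed.

Lemma ham x : (forall y, y \in orbit_of Q x -> [&& s1 y != y, s2 y != y & s1 y != s2 y]) ->
  cyclic_orbit Q1 Q2 (orbit_of Q x).
Proof.
set O := orbit_of Q x; move=> Hdeg; pose p := (x, true).
have nb : forall q, fconnect tau p q -> ~~ bounce q.
  move=> [y c] /T_sub /= Hy; have Hy' : y \in O by rewrite inE.
  have /and3P [N1 N2 _] := Hdeg y Hy'.
  by rewrite /bounce; case: (c).
pose t := map fst (orbit tau p).
have Hu : uniq t.
  rewrite map_inj_in_uniq ?orbit_uniq // => [[a1 a2]] [b1 b2] Ha Hb /= E; subst b1.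
  case: (eqVneq a2 b2) => [-> //|Hne].
  exfalso.
  have Hpa : fconnect tau p (a1, a2) by rewrite fconnect_orbit.
  have Hpb : fconnect tau p (a1, b2) by rewrite fconnect_orbit.
  have Hab : fconnect tau (a1, a2) (phi (a1, a2)).
    have -> : phi (a1, a2) = (a1, b2) by rewrite /phi /=; move: Hne; case: (a2); case: (b2).
    apply: connect_trans Hpb; by rewrite fconnect_sym //; exact: tau_inj.
  have [j Hj] := phi_bounce Hab.
  by have := nb _ (connect_trans Hpa (fconnect_iter _ j _)); rewrite Hj.
have Hset : [set y in t] = O.
  apply/setP => y; rewrite inE; apply/mapP/idP.
    move=> [d Hd ->]; rewrite inE; apply: (T_sub (p := p)); by rewrite fconnect_orbit.
  rewrite inE => /(@T_cover p) [c Hc]; exists (y, c) => //; by rewrite -fconnect_orbit.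
have Hc : cycle A t.
  rewrite /t cycle_map; apply: (@sub_in_cycle _ (mem (orbit tau p)) (frel tau)); last 2 first.
  - exact: allss.
  - exact: cycle_orbit tau_inj p.
  move=> a b Ha _ /= /eqP <-; rewrite /tau /=; apply: adj_sb.
  by have := nb a; rewrite fconnect_orbit Ha /bounce => /(_ isT).
have Hsz : size t == #|O| by rewrite -Hset cardsE (card_uniqP Hu).
have H3 : (2 < #|O|)%N.
  have Hx : x \in O by exact: in_orbit_self.
  have /and3P [N1 N2 N12] := Hdeg x Hx.
  have : [set s1 x; s2 x] \subset O :\ x.
    apply/subsetP => z /set2P [] ->; rewrite in_setD1 ?N1 ?N2 /=.
    + exact: (sb_in_orbit true Hx).
    + exact: (sb_in_orbit false Hx).
  move/subset_leq_card; rewrite cards2 N12 (cardsD1 x O) Hx /= add1n ltnS; exact.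
rewrite /cyclic_orbit H3 /=; apply/orP; right; apply/existsP.
exists (Tuple Hsz); by rewrite /= Hu Hc Hset eqxx.
Qed.

Lemma ep_exists x : (2 <= #|orbit_of Q x|)%N -> ~~ cyclic_orbit Q1 Q2 (orbit_of Q x) ->
  exists2 y, y \in orbit_of Q x & ep y.
Proof.
move=> Hs Hnc; case: (boolP [exists y in orbit_of Q x, ep y]) => [/existsP [y /andP [Hy Hey]]|Hno].
  by exists y.
exfalso; move/negP: Hnc; apply.
have Hall : forall y, y \in orbit_of Q x -> (s1 y != y) && (s2 y != y).
  move=> y Hy; have := no_iso Hs Hy.
  have : ~~ ep y by apply/negP => He; move/negP: Hno; apply; apply/existsP; exists y; rewrite Hy He.
  by rewrite /ep; case: (s1 y != y); case: (s2 y != y).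
case: (boolP [exists y in orbit_of Q x, s1 y == s2 y]) => [/existsP [y /andP [Hy /eqP E]]|Hd].
  have /andP [N1 N2] := Hall y Hy.
  rewrite -(orbit_same Hy) (common_orbit E N1) /cyclic_orbit.
  have N1' : y != s1 y by rewrite eq_sym.
  rewrite cards2 N1' /= inE sig_edge2 //= E sig_edge2 //; by rewrite -E.
apply: ham => y Hy; have /andP [N1 N2] := Hall y Hy; rewrite N1 N2 /=.
by apply/negP => E; move/negP: Hd; apply; apply/existsP; exists y; rewrite Hy E.
Qed.

Lemma two_iter (p : 'I_n * bool) : bounce p ->
  #|[set j : 'I_(order tau p) | bounce (iter j tau p)]| = 2%N.
Proof.
move=> Hbp; set L := order tau p.
have Hp1 : phi p = iter 1 tau p by apply/eqP; rewrite -bounceE.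
have HL := L_even p; have HL0 := L_gt0 p.
have Hh := odd_double_half L; rewrite (negbTE HL) -muln2 /= in Hh.
have Hiff : forall j, (j < L)%N -> bounce (iter j tau p) = (j == 0%N) || (2 * j == L).
  move=> j Hj; rewrite bounceE (phi_iter Hp1) ?(ltnW Hj) // -iterS.
  apply/eqP/orP.
    move=> E; case: (eqVneq j 0%N) => [->|Hj0]; first by left.
    right; apply/eqP.
    case: (leqP (1 + L - j) j.+1) => Hle.
      have := iter_range Hle _ E; lia.
    have := iter_range (ltnW Hle) _ (esym E); lia.
  move=> [/eqP ->|/eqP E].
    by rewrite subn0 /L iter_addL.
  by rewrite (_ : (1 + L - j = j.+1)%N) //; lia.
have Hh0 : (0 < L)%N by [].
have Hh1 : (L./2 < L)%N by lia.
have -> : [set j : 'I_L | bounce (iter j tau p)] = [set Ordinal Hh0; Ordinal Hh1].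
  apply/setP => j; rewrite !inE Hiff ?ltn_ord //.
  rewrite -!val_eqE /=; apply/orP/orP => [] [] /eqP E; [left|right|left|right]; apply/eqP => //; lia.
rewrite cards2; suff -> : Ordinal Hh0 != Ordinal Hh1 by [].
by rewrite -val_eqE /=; apply/eqP; lia.
Qed.

Lemma count2_ep y0 : (2 <= #|orbit_of Q y0|)%N -> ep y0 ->
  #|[set y in orbit_of Q y0 | ep y]| = 2%N.
Proof.
move=> Hs He0; set O := orbit_of Q y0.
pose p := (y0, s1 y0 == y0).
have Hbp : bounce p.
  rewrite /bounce /p /=; move: He0; rewrite /ep.
  case E: (s1 y0 == y0) => /=; first by rewrite E.
  by case: (s2 y0 == y0).
set L := order tau p.
have Hp1 : phi p = iter 1 tau p by apply/eqP; rewrite -bounceE.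
have HphiT : forall q, fconnect tau p q -> fconnect tau p (phi q).
  move=> q Hq; rewrite -(iter_findex Hq) (phi_iter Hp1); first exact: fconnect_iter.
  by apply: ltnW; apply: findex_max.
have Hall : forall y c, y \in O -> fconnect tau p (y, c).
  move=> y c; rewrite inE => /(@T_cover p) [c' Hc'].
  case: (eqVneq c c') => [-> //|Hne].
  have -> : (y, c) = phi (y, c') by rewrite /phi /=; move: Hne; case: (c); case: (c').
  exact: HphiT.
have HsubO : forall q, fconnect tau p q -> q.1 \in O.
  by move=> q /T_sub Hq; rewrite inE.
rewrite -(two_iter Hbp).
transitivity #|[set q | fconnect tau p q && bounce q]|.
  rewrite -(@card_in_imset _ _ (fun y => (y, s1 y == y))); last first.
    by move=> a b _ _ [].
  apply: eq_card => [[y c]]; rewrite !inE; apply/imsetP/andP.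
    move=> [z]; rewrite inE => /andP [Hz Hez] [-> ->]; split; first exact: Hall.
    rewrite /bounce /=; move: Hez; rewrite /ep.
    case E: (s1 z == z) => /=; first by rewrite E.
    by case: (s2 z == z).
  move=> [Hq Hb]; have Hy := HsubO _ Hq; rewrite /= in Hy.
  have Hni := no_iso Hs Hy.
  exists y; last first.
    congr (_, _); move: Hb Hni; rewrite /bounce /=.
    case: (c) => /= /eqP Hb Hni; first by rewrite Hb eqxx.
    by rewrite Hb eqxx orbF in Hni; rewrite (negbTE Hni).
  rewrite inE Hy /ep /=; move: Hb Hni; rewrite /bounce /=.
  case: (c) => /= /eqP Hb Hni.
    by rewrite Hb eqxx /= in Hni *; rewrite Hni.
  by rewrite Hb eqxx orbF in Hni *; rewrite Hni.
rewrite -(@card_imset _ _ (fun j : 'I_L => iter j tau p)); last first.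
  move=> i j /= E; apply: ord_inj; rewrite -(findex_iter (ltn_ord i)) E findex_iter //; exact: ltn_ord.
apply: eq_card => q; rewrite !inE; apply/andP/imsetP.
  move=> [Hq Hb]; exists (Ordinal (findex_max Hq)); last by rewrite /= iter_findex.
  by rewrite inE /= iter_findex.
by move=> [j]; rewrite inE => Hj ->; split => //; apply: fconnect_iter.
Qed.

Lemma orbit_count x : #|[set y in orbit_of Q x | ep y]| =
  (2 * ((2 <= #|orbit_of Q x|) && ~~ cyclic_orbit Q1 Q2 (orbit_of Q x)))%N.
Proof.
case: (boolP (cyclic_orbit Q1 Q2 (orbit_of Q x))) => Hc.
  rewrite andbF muln0; apply/eqP; rewrite cards_eq0; apply/eqP/setP => y.
  rewrite !inE; apply/negbTE; apply/negP => /andP [Hy He]; have Hy' : y \in orbit_of Q x by rewrite inE.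
  by move: (no_ep_cyclic Hc Hy'); rewrite He.
case: (leqP 2 #|orbit_of Q x|) => Hs /=.
  have [y0 Hy0 He0] := ep_exists Hs Hc.
  rewrite -(orbit_same Hy0) in Hs *; exact: count2_ep.
apply/eqP; rewrite cards_eq0; apply/eqP/setP => y.
rewrite !inE; apply/negbTE; apply/negP => /andP [Hy He]; have Hy' : y \in orbit_of Q x by rewrite inE.
by move: (no_ep_small Hs Hy'); rewrite He.
Qed.

Lemma E_eq : #|[set x | ep x]| = (2 * Lambda_ge Q1 Q2 2)%N.
Proof.
rewrite (@card_disj_cover _ _ _ (orbits Q1 Q2) (fun O => [set y in O | ep y])).
- rewrite /Lambda_ge -sum_nat_bool big_distrr /=; apply: eq_bigr => O /imsetP [x _ ->].
  exact: orbit_count.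
- move=> x; rewrite inE => Hx; exists (orbit_of Q x); first by apply: imset_f.
  by rewrite inE in_orbit_self.
- by move=> O _; apply/subsetP => y; rewrite !inE => /andP [_ ->].
- move=> O O' y /imsetP [a _ ->] /imsetP [b _ ->]; rewrite !inE => /andP [Ha _] /andP [Hb _].
  have Ha' : y \in orbit_of Q a by rewrite inE.
  have Hb' : y \in orbit_of Q b by rewrite inE.
  by rewrite -(orbit_same Ha') -(orbit_same Hb').
Qed.

End Graph.

Lemma D3 (n : nat) (Q1 Q2 : {set {set 'I_n}}) : secondary_structure Q1 -> secondary_structure Q2 ->
  (Acount (Q1 :|: Q2) + Lambda_ge Q1 Q2 2 = symdiff_card Q1 Q2)%N.
Proof. by move=> H1 H2; apply: D3_from_E => //; apply: E_eq. Qed.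
Unset Implicit Arguments.
Theorem mainTheorem11 (n : nat) (Q1 Q2 : {set {set 'I_n}}) :
  (3 <= n)%N -> secondary_structure Q1 -> secondary_structure Q2 ->
  dm 4 Q1 Q2 = (symdiff_card Q1 Q2)%:R - 2%:R / (n.+1)%:R * (Acount (Q1 :|: Q2))%:R
  /\
  dm 4 Q1 Q2 = (symdiff_card Q1 Q2)%:R - 2%:R / (n.+1)%:R *
                 ((symdiff_card Q1 Q2)%:R - (Lambda_ge Q1 Q2 2)%:R).
Proof.
move=> Hn H1 H2.
have HD3 := D3 H1 H2.
have Hdp := dprime_eq (fun e => @sec_card2 _ _ e H1) (fun e => @sec_card2 _ _ e H2).
have Hcap := SQcap_card H1 H2.
have HS1 := SQ_card H1; have HS2 := SQ_card H2.
have HA := Acount_pairs H1 H2.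
have HU := cardsU (SQ Q1) (SQ Q2).
have Hl1 := subset_leq_card (subsetIl (SQ Q1) (SQ Q2)).
have Hl2 := subset_leq_card (subsetIr (SQ Q1) (SQ Q2)).
have Hc1 := subset_leq_card (subsetIl Q1 Q2).
have Hc2 := subset_leq_card (subsetIr Q1 Q2).
have Hsd := symdiff_eq Q1 Q2.
set A := Acount _ in HD3 HA *; set L := Lambda_ge _ _ _ in HD3 *.
set D := symdiff_card _ _ in HD3 Hsd *.
rewrite Hcap HS1 -HA in Hl1; rewrite Hcap HS2 -HA in Hl2.
have Hdp' : dprime 4 Q1 Q2 = (n.+1 * D - 2 * A)%N.
  rewrite Hdp HU Hcap HS1 HS2 -HA Hsd.
  nia.
have Hle : (2 * A <= n.+1 * D)%N.
  rewrite Hsd. nia.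
have Hbin : 'C(n + 4 - 3, n) = n.+1.
  by rewrite (_ : (n + 4 - 3 = n.+1)%N) ?binSn //; lia.
have Hnz : (n.+1%:R : rat) != 0 by rewrite pnatr_eq0.
have E1 : dm 4 Q1 Q2 = D%:R - 2%:R / (n.+1)%:R * A%:R.
  rewrite /dm Hbin Hdp' natrB // !natrM; field; by move: Hnz; rewrite -addn1 natrD addrC.
split=> //; rewrite E1 -natrB; last by lia.
by rewrite (_ : (D - L = A)%N) //; lia.
Qed.
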